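(* Let $\Theta$ be given, let $M_1,M_2$ be $\omega$-saturated $\Theta$-models, let $x$ be a variable, and let $t\in U_1$, $t'\in U_2$ satisfy $tp_x(M_1,t)\subseteq tp_x(M_2,t')$. Define $A=\{\langle a,b\rangle:\exists i,j\,(\{i,j\}=\{1,2\},\ a\in U_i,\ b\in U_j,\ tp_x(M_i,a)\subseteq tp_x(M_j,b))\}$ and $B=\{\langle a,b\rangle:\exists i,j\,(\{i,j\}=\{1,2\},\ a\in U_i,\ b\in U_j,\ imp_x(M_i,a)\supseteq imp_x(M_j,b))\}$. Then $(A,B)$ is a $(2,2)$-modal $\langle(M_1,t),(M_2,t')\rangle$-asimulation.
   Context: Correspondence language: classical first-order logic without identity over $\Sigma=\{R,R_\Box,R_\Diamond,P_1,P_2,\dots\}$ ($R,R_\Box,R_\Diamond$ binary, $P_n$ unary). $\Theta$ is a subset of $\Sigma$ containing $R,R_\Box,R_\Diamond$; $\Theta$-models $M_k=\langle U_k,\iota_k\rangle$, with $R_k=\iota_k(R)$, $R_{\Box k}=\iota_k(R_\Box)$, $R_{\Diamond k}=\iota_k(R_\Diamond)$. $M,a\models\varphi(x)$ means $\varphi$ holds in $M$ under assignments sending $x$ to $a$; $a\models_k\varphi(x)$ abbreviates $M_k,a\models\varphi(x)$. $s\overset{\leftrightarrow}{A}t$ means $sAt$ and $tAs$. Modal intuitionistic formulas: built from $p_n,\bot$ with $\wedge,\vee,\to,\Box,\Diamond$. $ST_{22}(p_n,x)=P_n(x)$, $ST_{22}(\bot,x)=\bot$, commutes with $\wedge,\vee$;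 $ST_{22}(I\to J,x)=\forall y(R(x,y)\to(ST_{22}(I,y)\to ST_{22}(J,y)))$; $ST_{22}(\Box I,x)=\forall y(R(x,y)\to\forall z(R_\Box(y,z)\to ST_{22}(I,z)))$; $ST_{22}(\Diamond I,x)=\forall y(R(x,y)\to\exists z(R_\Diamond(y,z)\wedge ST_{22}(I,z)))$. $int_x(\Theta)$ is the set of all $\Theta$-formulas of the form $ST_{22}(I,x)$ with $I$ modal intuitionistic. For a $\Theta$-model $M$ and $t\in U$: $tp_x(M,t)=\{\varphi\in int_x(\Theta):M,t\models\varphi\}$, $\overline{tp}_x(M,t)=\{\varphi\in int_x(\Theta):M,t\not\models\varphi\}$, and $imp_x(M,t)=\bigcap\{\overline{tp}_x(M,u):\iota(R_\Diamond)(t,u)\}$. $\omega$-saturation: for $\bar a_n\in U$, $[M,\bar a_n]$ is the expansion of $M$ by new constants for $\bar a_n$ interpreted as themselves. $M$ is $\omega$-saturated iff for all $k,n$ and all $\bar a_n\in U$, every set of formulas $\Gamma(\bar w_k)$ (in the expanded language, free variables among $\bar w_k$) consistent with the set of all sentences true in $[M,\bar a_n]$ is satisfiable in $[M,\bar a_n]$. A $(2,2)$-modal $\langle(M_1,t),(M_2,u)\rangle$-asimulation is a pair $(A,B)$ with $A,B\subseteq(U_1\times U_2)\cup(U_2\times U_1)$ such that $tAu$ and, for all $i,j\in\{1,2\}$, $a,c,e\in U_i$, $b,d,f\in U_j$, unary $P\in\Theta$: if $aAb$ and $a\models_iP(x)$ then $b\models_jP(x)$; if $aAb$, $bR_jd$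 then some $c\in U_i$ has $aR_ic$ and $c\overset{\leftrightarrow}{A}d$; if $aAb$, $bR_jd$, $dR_{\Box j}f$ then some $c,e\in U_i$ have $aR_ic$, $cR_{\Box i}e$, $eAf$; if $aAb$, $bR_jd$ then some $c\in U_i$ has $aR_ic$ and $cBd$; if $aBb$, $aR_{\Diamond i}c$ then some $d\in U_j$ has $bR_{\Diamond j}d$ and $cAd$. *)

(* Defs.v *)
From Stdlib Require Import Arith.

(* Theta is determined by the set [theta] of indices n with P_n in Theta;
   R, R_Box, R_Diamond are always in Theta. *)

Inductive term : Type :=
| TVar (v : nat)
| TConst (k : nat).   (* new constant c_k (for the expansions [M, a_n]) *)

Inductive rel : Type := RelR | RelBox | RelDia.

Inductive form : Type :=
| FBot
| FPred (n : nat) (t : term)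
| FRel (r : rel) (t1 t2 : term)
| FNot (f : form)
| FAnd (f g : form)
| FOr (f g : form)
| FImp (f g : form)
| FAll (v : nat) (f : form)
| FEx (v : nat) (f : form).

(* Theta-model: nonempty universe; interpretations of R, R_Box, R_Dia and of
   the unary predicates (only those with [theta n] are ever consulted). *)
Record model : Type := Model {
  U : Type;
  inh : U;
  mR : U -> U -> Prop;
  mRB : U -> U -> Prop;
  mRD : U -> U -> Prop;
  mP : nat -> U -> Prop
}.

Definition upd {A : Type} (s : nat -> A) (v : nat) (a : A) : nat -> A :=
  fun w => if Nat.eqb w v then a else s w.

Definition eval_term (M : model) (c s : nat -> U M) (t : term) : U M :=
  match t with TVar v => s v | TConst k => c k end.

Definition interp_rel (M : model) (r : rel) : U M -> U M -> Prop :=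
  match r with RelR => mR M | RelBox => mRB M | RelDia => mRD M end.

Fixpoint sat (M : model) (c s : nat -> U M) (f : form) : Prop :=
  match f with
  | FBot => False
  | FPred n t => mP M n (eval_term M c s t)
  | FRel r t1 t2 => interp_rel M r (eval_term M c s t1) (eval_term M c s t2)
  | FNot g => ~ sat M c s g
  | FAnd g h => sat M c s g /\ sat M c s h
  | FOr g h => sat M c s g \/ sat M c s h
  | FImp g h => sat M c s g -> sat M c s h
  | FAll v g => forall a : U M, sat M c (upd s v a) g
  | FEx v g => exists a : U M, sat M c (upd s v a) g
  end.

Definition term_ok (nc : nat) (t : term) : Prop :=
  match t with TVar _ => True | TConst k => k < nc end.

(* f is a formula of the language Theta expanded by the constants c_0..c_{nc-1} *)
Fixpoint wf (theta : nat -> Prop) (nc : nat) (f : form) : Prop :=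
  match f with
  | FBot => True
  | FPred n t => theta n /\ term_ok nc t
  | FRel _ t1 t2 => term_ok nc t1 /\ term_ok nc t2
  | FNot g => wf theta nc g
  | FAnd g h | FOr g h | FImp g h => wf theta nc g /\ wf theta nc h
  | FAll _ g | FEx _ g => wf theta nc g
  end.

Definition term_has_var (t : term) (v : nat) : Prop :=
  match t with TVar w => w = v | TConst _ => False end.

Fixpoint free (f : form) (v : nat) : Prop :=
  match f with
  | FBot => False
  | FPred _ t => term_has_var t v
  | FRel _ t1 t2 => term_has_var t1 v \/ term_has_var t2 v
  | FNot g => free g v
  | FAnd g h | FOr g h | FImp g h => free g v \/ free h v
  | FAll w g | FEx w g => w <> v /\ free g v
  end.

Definition sentence (f : form) : Prop := forall v, ~ free f v.

(* Gamma (with free variables among w_0..w_{k-1}) is consistent with the set of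
   all sentences true in [M, a_n]: some structure for the expanded language
   satisfies Th([M,a_n]) together with Gamma (semantic consistency; equivalent
   to syntactic consistency by completeness). *)
Definition consistent_with_theory (theta : nat -> Prop) (M : model) (n : nat)
    (abar : nat -> U M) (Gamma : form -> Prop) : Prop :=
  exists (N : model) (cN sN : nat -> U N),
    (forall psi, wf theta n psi -> sentence psi ->
        sat M abar (fun _ => inh M) psi -> sat N cN sN psi) /\
    (forall phi, Gamma phi -> sat N cN sN phi).

Definition omega_saturated (theta : nat -> Prop) (M : model) : Prop :=
  forall (k n : nat) (abar : nat -> U M) (Gamma : form -> Prop),
    (forall phi, Gamma phi -> wf theta n phi /\ (forall v, free phi v -> v < k)) ->
    consistent_with_theory theta M n abar Gamma ->
    exists s : nat -> U M, forall phi, Gamma phi -> sat M abar s phi.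

Inductive mform : Type :=
| MVar (n : nat)
| MBot
| MAnd (I J : mform)
| MOr (I J : mform)
| MImp (I J : mform)
| MBox (I : mform)
| MDia (I : mform).

(* standard translation; the bound variables y, z are x+1, x+2
   (all bound variables of ST22 I x are > x, so no capture occurs) *)
Fixpoint ST22 (I : mform) (x : nat) : form :=
  match I with
  | MVar n => FPred n (TVar x)
  | MBot => FBot
  | MAnd I1 J1 => FAnd (ST22 I1 x) (ST22 J1 x)
  | MOr I1 J1 => FOr (ST22 I1 x) (ST22 J1 x)
  | MImp I1 J1 =>
      FAll (S x) (FImp (FRel RelR (TVar x) (TVar (S x)))
                       (FImp (ST22 I1 (S x)) (ST22 J1 (S x))))
  | MBox I1 =>
      FAll (S x) (FImp (FRel RelR (TVar x) (TVar (S x)))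
        (FAll (S (S x)) (FImp (FRel RelBox (TVar (S x)) (TVar (S (S x))))
                              (ST22 I1 (S (S x))))))
  | MDia I1 =>
      FAll (S x) (FImp (FRel RelR (TVar x) (TVar (S x)))
        (FEx (S (S x)) (FAnd (FRel RelDia (TVar (S x)) (TVar (S (S x))))
                             (ST22 I1 (S (S x))))))
  end.

Definition in_int (theta : nat -> Prop) (x : nat) (phi : form) : Prop :=
  (exists I : mform, phi = ST22 I x) /\ wf theta 0 phi.

Definition holds (M : model) (x : nat) (a : U M) (phi : form) : Prop :=
  forall s : nat -> U M, s x = a -> sat M (fun _ => inh M) s phi.

Definition tp (theta : nat -> Prop) (x : nat) (M : model) (t : U M) (phi : form) : Prop :=
  in_int theta x phi /\ holds M x t phi.

Definition ntp (theta : nat -> Prop) (x : nat) (M : model) (t : U M) (phi : form) : Prop :=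
  in_int theta x phi /\ ~ holds M x t phi.

(* imp_x(M,t) = intersection of ntp(M,u) over R_Dia-successors u of t
   (taken inside int_x(Theta), so it is int_x(Theta) when t has none) *)
Definition imp (theta : nat -> Prop) (x : nat) (M : model) (t : U M) (phi : form) : Prop :=
  in_int theta x phi /\ (forall u : U M, mRD M t u -> ntp theta x M u phi).

(* points of U_1 and U_2 are tagged: true = model 1, false = model 2 *)
Definition pick (M1 M2 : model) (b : bool) : model := if b then M1 else M2.
Definition elt (M1 M2 : model) : Type := {b : bool & U (pick M1 M2 b)}.

Definition mk {M1 M2 : model} (b : bool) (a : U (pick M1 M2 b)) : elt M1 M2 :=
  existT (fun b => U (pick M1 M2 b)) b a.

Definition asimulation22 (theta : nat -> Prop) (M1 M2 : model) (t : U M1) (u : U M2)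
    (A B : elt M1 M2 -> elt M1 M2 -> Prop) : Prop :=
  (* A, B are subsets of (U1 x U2) u (U2 x U1) *)
  (forall p q, A p q -> projT1 p <> projT1 q) /\
  (forall p q, B p q -> projT1 p <> projT1 q) /\
  A (@mk M1 M2 true t) (@mk M1 M2 false u) /\
  (forall (i j : bool) (a : U (pick M1 M2 i)) (b : U (pick M1 M2 j)),
     A (mk i a) (mk j b) ->
     forall n, theta n -> mP (pick M1 M2 i) n a -> mP (pick M1 M2 j) n b) /\
  (forall (i j : bool) (a : U (pick M1 M2 i)) (b d : U (pick M1 M2 j)),
     A (mk i a) (mk j b) -> mR _ b d ->
     exists c : U (pick M1 M2 i), mR _ a c /\ A (mk i c) (mk j d) /\ A (mk j d) (mk i c)) /\
  (forall (i j : bool) (a : U (pick M1 M2 i)) (b d f : U (pick M1 M2 j)),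
     A (mk i a) (mk j b) -> mR _ b d -> mRB _ d f ->
     exists c e : U (pick M1 M2 i), mR _ a c /\ mRB _ c e /\ A (mk i e) (mk j f)) /\
  (forall (i j : bool) (a : U (pick M1 M2 i)) (b d : U (pick M1 M2 j)),
     A (mk i a) (mk j b) -> mR _ b d ->
     exists c : U (pick M1 M2 i), mR _ a c /\ B (mk i c) (mk j d)) /\
  (forall (i j : bool) (a c : U (pick M1 M2 i)) (b : U (pick M1 M2 j)),
     B (mk i a) (mk j b) -> mRD _ a c ->
     exists d : U (pick M1 M2 j), mRD _ b d /\ A (mk i c) (mk j d)).

Definition A_tp (theta : nat -> Prop) (x : nat) (M1 M2 : model)
    (p q : elt M1 M2) : Prop :=
  projT1 p <> projT1 q /\
  (forall phi, tp theta x (pick M1 M2 (projT1 p)) (projT2 p) phi ->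
               tp theta x (pick M1 M2 (projT1 q)) (projT2 q) phi).

Definition B_imp (theta : nat -> Prop) (x : nat) (M1 M2 : model)
    (p q : elt M1 M2) : Prop :=
  projT1 p <> projT1 q /\
  (forall phi, imp theta x (pick M1 M2 (projT1 q)) (projT2 q) phi ->
               imp theta x (pick M1 M2 (projT1 p)) (projT2 p) phi).

(* Main.v *)
Require Import Defs.
From Stdlib Require Import Arith Lia List Cantor Classical ClassicalEpsilon FunctionalExtensionality.
Import ListNotations.

Definition et (t : term) : nat := match t with TVar v => to_nat (0, v) | TConst k => to_nat (1, k) end.
Definition er (r : rel) : nat := match r with RelR => 0 | RelBox => 1 | RelDia => 2 end.
Fixpoint enc (f : form) : nat :=
  match f with
  | FBot => to_nat (0, 0)
  | FPred n t => to_nat (1, to_nat (n, et t))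
  | FRel r t1 t2 => to_nat (2, to_nat (er r, to_nat (et t1, et t2)))
  | FNot g => to_nat (3, enc g)
  | FAnd g h => to_nat (4, to_nat (enc g, enc h))
  | FOr g h => to_nat (5, to_nat (enc g, enc h))
  | FImp g h => to_nat (6, to_nat (enc g, enc h))
  | FAll v g => to_nat (7, to_nat (v, enc g))
  | FEx v g => to_nat (8, to_nat (v, enc g))
  end.

Lemma to_nat_inj a b c d : to_nat (a, b) = to_nat (c, d) -> a = c /\ b = d.
Proof. intro H. apply (f_equal of_nat) in H. rewrite !cancel_of_to in H. now inversion H. Qed.

Lemma et_inj t t' : et t = et t' -> t = t'.
Proof. destruct t, t'; cbn [et]; intro H; apply to_nat_inj in H; destruct H; try lia; congruence. Qed.
Lemma er_inj r r' : er r = er r' -> r = r'.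
Proof. destruct r, r'; simpl; intro H; congruence. Qed.

Lemma enc_inj f : forall f', enc f = enc f' -> f = f'.
Proof.
  induction f; intros f' H; destruct f'; cbn [enc] in H; apply to_nat_inj in H; destruct H as [H1 H2];
  try discriminate H1;
  repeat match goal with
  | H : to_nat _ = to_nat _ |- _ => apply to_nat_inj in H; destruct H
  end;
  repeat match goal with
  | H : et _ = et _ |- _ => apply et_inj in H
  | H : er _ = er _ |- _ => apply er_inj in H
  end; subst; f_equal; auto.
Qed.

Definition dec (m : nat) : form :=
  match excluded_middle_informative (exists f, enc f = m) with
  | left H => proj1_sig (constructive_indefinite_description _ H)
  | right _ => FBot
  end.

Lemma dec_surj f : exists m, dec m = f.
Proof.
  exists (enc f). unfold dec. destruct (excluded_middle_informative _) as [H|H].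
  - destruct (constructive_indefinite_description _ H) as [g Hg]; simpl. now apply enc_inj.
  - exfalso; apply H; eauto.
Qed.

Definition sub_term (sg : nat -> term) (t : term) : term :=
  match t with TVar v => sg v | TConst k => TConst k end.

Fixpoint subst (sg : nat -> term) (f : form) : form :=
  match f with
  | FBot => FBot
  | FPred n t => FPred n (sub_term sg t)
  | FRel r t1 t2 => FRel r (sub_term sg t1) (sub_term sg t2)
  | FNot g => FNot (subst sg g)
  | FAnd g h => FAnd (subst sg g) (subst sg h)
  | FOr g h => FOr (subst sg g) (subst sg h)
  | FImp g h => FImp (subst sg g) (subst sg h)
  | FAll v g => FAll v (subst (upd sg v (TVar v)) g)
  | FEx v g => FEx v (subst (upd sg v (TVar v)) g)
  end.

Definition good (sg : nat -> term) := forall w, sg w = TVar w \/ exists k, sg w = TConst k.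

Lemma upd_eq {A} (s : nat -> A) v a : upd s v a v = a.
Proof. unfold upd. now rewrite Nat.eqb_refl. Qed.
Lemma upd_neq {A} (s : nat -> A) v a w : w <> v -> upd s v a w = s w.
Proof. intro H. unfold upd. apply Nat.eqb_neq in H. now rewrite H. Qed.

Lemma good_upd sg v : good sg -> good (upd sg v (TVar v)).
Proof.
  intros H w. destruct (Nat.eq_dec w v) as [->|Hn].
  - rewrite upd_eq; auto.
  - rewrite upd_neq; auto.
Qed.

Lemma subst_sat (M : model) f : forall sg c s, good sg ->
  (sat M c s (subst sg f) <-> sat M c (fun w => eval_term M c s (sg w)) f).
Proof.
  induction f; intros sg c s Hg; simpl; try tauto.
  - destruct t; simpl; tauto.
  - destruct t1, t2; simpl; tauto.
  - rewrite IHf; tauto.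
  - rewrite IHf1, IHf2; tauto.
  - rewrite IHf1, IHf2; tauto.
  - rewrite IHf1, IHf2; tauto.
  - assert (E : forall a, (fun w => eval_term M c (upd s v a) (upd sg v (TVar v) w))
                  = upd (fun w => eval_term M c s (sg w)) v a).
    { intro a; apply functional_extensionality; intro w.
      destruct (Nat.eq_dec w v) as [->|Hn].
      - rewrite !upd_eq; simpl; now rewrite upd_eq.
      - rewrite !upd_neq by auto. destruct (Hg w) as [H|[k H]]; rewrite H; simpl; auto.
        now rewrite upd_neq. }
    split; intros H a; specialize (H a); rewrite IHf in * by (apply good_upd; auto);
      rewrite E in *; auto.
  - assert (E : forall a, (fun w => eval_term M c (upd s v a) (upd sg v (TVar v) w))
                  = upd (fun w => eval_term M c s (sg w)) v a).
    { intro a; apply functional_extensionality; intro w.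
      destruct (Nat.eq_dec w v) as [->|Hn].
      - rewrite !upd_eq; simpl; now rewrite upd_eq.
      - rewrite !upd_neq by auto. destruct (Hg w) as [H|[k H]]; rewrite H; simpl; auto.
        now rewrite upd_neq. }
    split; intros [a H]; exists a; rewrite IHf in * by (apply good_upd; auto);
      rewrite E in *; auto.
Qed.

Lemma sat_ext_free (M : model) f : forall c s s', (forall v, free f v -> s v = s' v) ->
  (sat M c s f <-> sat M c s' f).
Proof.
  induction f; intros c s s' H; simpl in *; try tauto.
  - destruct t; simpl in *; [rewrite (H v eq_refl)|]; tauto.
  - destruct t1, t2; simpl in *;
      repeat match goal with |- context [s ?v] => rewrite (H v) by auto end; tauto.
  - rewrite (IHf c s s'); tauto.
  - rewrite (IHf1 c s s'), (IHf2 c s s') by auto; tauto.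
  - rewrite (IHf1 c s s'), (IHf2 c s s') by auto; tauto.
  - rewrite (IHf1 c s s'), (IHf2 c s s') by auto; tauto.
  - split; intros H1 a; specialize (H1 a);
    (eapply IHf; [|exact H1]); intros w Hw; destruct (Nat.eq_dec w v) as [->|Hn];
      rewrite ?upd_eq, ?upd_neq by auto; auto; symmetry; auto.
  - split; intros [a H1]; exists a;
    (eapply IHf; [|exact H1]); intros w Hw; destruct (Nat.eq_dec w v) as [->|Hn];
      rewrite ?upd_eq, ?upd_neq by auto; auto; symmetry; auto.
Qed.

Definition cb (K : nat) (f : form) := wf (fun _ => True) K f.

Lemma wf_mono th th' n n' f : wf th n f -> (forall m, th m -> th' m) -> n <= n' -> wf th' n' f.
Proof.
  intros H Ht Hn. induction f; simpl in *; try tauto.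
  - destruct H; split; auto; destruct t; simpl in *; auto; lia.
  - destruct H; destruct t1, t2; simpl in *; split; auto; lia.
Qed.

Lemma sat_ext_const (M : model) K f : cb K f -> forall c c' s, (forall k, k < K -> c k = c' k) ->
  (sat M c s f <-> sat M c' s f).
Proof.
  unfold cb. induction f; intros Hw c c' s H; simpl in *; try tauto.
  - destruct t; simpl in *; [|rewrite H by tauto]; tauto.
  - destruct t1, t2; simpl in *; rewrite ?H by tauto; tauto.
  - rewrite (IHf Hw c c'); tauto.
  - rewrite (IHf1 (proj1 Hw) c c'), (IHf2 (proj2 Hw) c c') by auto; tauto.
  - rewrite (IHf1 (proj1 Hw) c c'), (IHf2 (proj2 Hw) c c') by auto; tauto.
  - rewrite (IHf1 (proj1 Hw) c c'), (IHf2 (proj2 Hw) c c') by auto; tauto.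
  - split; intros H1 a; specialize (H1 a); [apply (proj1 (IHf Hw c c' _ H)) | apply (proj2 (IHf Hw c c' _ H))]; auto.
  - split; intros [a H1]; exists a; [apply (proj1 (IHf Hw c c' _ H)) | apply (proj2 (IHf Hw c c' _ H))]; auto.
Qed.

Lemma wf_subst th K f : forall sg, wf th K f -> (forall w k, sg w = TConst k -> k < K) ->
  wf th K (subst sg f).
Proof.
  induction f; intros sg Hw H; simpl in *.
  all: try match goal with
    | |- wf _ _ (subst (upd _ _ _) _) => apply IHf; auto; intros w k; destruct (Nat.eq_dec w v) as [->|Hn];
        [rewrite upd_eq; discriminate | rewrite upd_neq by auto; eauto]
    end.
  all: try (destruct Hw; split; auto).
  all: try (apply IHf; auto).
  all: try (destruct t; simpl in *; auto; destruct (sg v) eqn:E; simpl; eauto).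
  all: try (destruct t1; simpl in *; auto; destruct (sg v) eqn:E; simpl; eauto).
  all: try (destruct t2; simpl in *; auto; destruct (sg v) eqn:E; simpl; eauto).
Qed.

Lemma free_subst f : forall sg v, free (subst sg f) v ->
  exists w, free f w /\ term_has_var (sg w) v.
Proof.
  induction f; intros sg u H; simpl in *; try tauto.
  - destruct t; simpl in *; [eauto|tauto].
  - destruct t1, t2; simpl in *; intuition eauto.
  - eauto.
  - destruct H as [H|H]; [destruct (IHf1 _ _ H)|destruct (IHf2 _ _ H)]; firstorder.
  - destruct H as [H|H]; [destruct (IHf1 _ _ H)|destruct (IHf2 _ _ H)]; firstorder.
  - destruct H as [H|H]; [destruct (IHf1 _ _ H)|destruct (IHf2 _ _ H)]; firstorder.
  - destruct H as [Hn H]. destruct (IHf _ _ H) as [w [Hw Hv]].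
    destruct (Nat.eq_dec w v) as [->|Hwv].
    + rewrite upd_eq in Hv. simpl in Hv. congruence.
    + rewrite upd_neq in Hv by auto. exists w; auto.
  - destruct H as [Hn H]. destruct (IHf _ _ H) as [w [Hw Hv]].
    destruct (Nat.eq_dec w v) as [->|Hwv].
    + rewrite upd_eq in Hv. simpl in Hv. congruence.
    + rewrite upd_neq in Hv by auto. exists w; auto.
Qed.

Definition close (sg : nat -> nat) (f : form) := subst (fun w => TConst (sg w)) f.

Lemma close_sentence sg f : sentence (close sg f).
Proof. intros v H. destruct (free_subst _ _ _ H) as [w [_ Hw]]. exact Hw. Qed.

Lemma good_close (sg : nat -> nat) : good (fun w => TConst (sg w)).
Proof. intro w; right; eauto. Qed.

Lemma close_sat (M : model) sg c s f :
  sat M c s (close sg f) <-> sat M c (fun w => c (sg w)) f.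
Proof. unfold close. rewrite subst_sat by apply good_close. simpl. tauto. Qed.

Definition inst v C f := subst (upd TVar v (TConst C)) f.

Lemma good_inst v C : good (upd TVar v (TConst C)).
Proof. intro w. destruct (Nat.eq_dec w v) as [->|Hn]. rewrite upd_eq; eauto. rewrite upd_neq; auto. Qed.

Lemma inst_sat (M : model) v C c s f :
  sat M c s (inst v C f) <-> sat M c (upd s v (c C)) f.
Proof.
  unfold inst. rewrite subst_sat by apply good_inst.
  assert (E : (fun w => eval_term M c s (upd TVar v (TConst C) w)) = upd s v (c C)).
  { apply functional_extensionality; intro w. destruct (Nat.eq_dec w v) as [->|Hn].
    rewrite !upd_eq; reflexivity. rewrite !upd_neq; auto. }
  rewrite E; tauto.
Qed.

Lemma sentence_sat (M : model) c s s' f : sentence f -> (sat M c s f <-> sat M c s' f).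
Proof. intro H. apply sat_ext_free. intros v Hv. exfalso; exact (H v Hv). Qed.

Definition FS (X : form -> Prop) : Prop :=
  forall L : list form, (forall f, In f L -> X f) ->
    exists (N : model) (c s : nat -> U N), forall f, In f L -> sat N c s f.

Definition tmax (t : term) := match t with TVar _ => 0 | TConst k => S k end.
Fixpoint maxc (f : form) : nat :=
  match f with
  | FBot => 0
  | FPred _ t => tmax t
  | FRel _ t1 t2 => max (tmax t1) (tmax t2)
  | FNot g => maxc g
  | FAnd g h | FOr g h | FImp g h => max (maxc g) (maxc h)
  | FAll _ g | FEx _ g => maxc g
  end.
Fixpoint lmax (L : list form) := match L with nil => 0 | f :: L => max (maxc f) (lmax L) end.

Lemma cb_maxc f n : maxc f <= n -> cb n f.
Proof.
  unfold cb; induction f; simpl; intros; try tauto.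
  - destruct t; simpl in *; split; auto; lia.
  - destruct t1, t2; simpl in *; split; lia.
  - split; [apply IHf1|apply IHf2]; lia.
  - split; [apply IHf1|apply IHf2]; lia.
  - split; [apply IHf1|apply IHf2]; lia.
Qed.

Lemma lmax_in f L : In f L -> maxc f <= lmax L.
Proof. induction L; simpl; [tauto|]. intros [H|H]; subst; try lia. specialize (IHL H); lia. Qed.

Definition fresh (K : nat) (L : list form) (f : form) := max K (max (maxc f) (lmax L)).

Fixpoint stage (X : form -> Prop) (K : nat) (m : nat) : list form :=
  match m with
  | 0 => nil
  | S m' =>
      let L := stage X K m' in
      if excluded_middle_informative (FS (fun f => X f \/ In f (dec m' :: L))) then
        match dec m' with
        | FEx v g => inst v (fresh K L (dec m')) g :: dec m' :: L
        | _ => dec m' :: L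
        end
      else FNot (dec m') :: L
  end.

Lemma FS_split X f : FS X -> FS (fun g => X g \/ In g [f]) \/ FS (fun g => X g \/ In g [FNot f]).
Proof.
  intro H. apply NNPP; intro Hn. apply not_or_and in Hn. destruct Hn as [H1 H2].
  apply H1. intros L1 HL1. apply NNPP; intro Hm1. apply H2. intros L2 HL2. apply NNPP; intro Hm2.
  destruct (H (filter (fun g => if excluded_middle_informative (X g) then true else false) (L1 ++ L2)))
    as [N [c [s Hs]]].
  { intros g Hg. apply filter_In in Hg. destruct Hg as [_ Hg].
    destruct (excluded_middle_informative (X g)); auto; discriminate. }
  assert (HX : forall g, In g (L1 ++ L2) -> X g -> sat N c s g).
  { intros g Hg Hx. apply Hs. apply filter_In. split; auto.
    destruct (excluded_middle_informative (X g)); tauto. }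
  destruct (classic (sat N c s f)) as [Hf|Hf].
  - apply Hm1. exists N, c, s. intros g Hg. destruct (HL1 g Hg) as [Hx|[<-|[]]]; auto.
    apply HX; auto. apply in_or_app; auto.
  - apply Hm2. exists N, c, s. intros g Hg. destruct (HL2 g Hg) as [Hx|[<-|[]]]; auto.
    apply HX; auto. apply in_or_app; auto.
Qed.

Lemma FS_sub (X Y : form -> Prop) : FS Y -> (forall f, X f -> Y f) -> FS X.
Proof. intros H Hs L HL. apply H. auto. Qed.

Lemma cb_mono n n' f : cb n f -> n <= n' -> cb n' f.
Proof. intros H Hn. eapply wf_mono; eauto. Qed.

Lemma FS_witness (X : form -> Prop) C v g :
  (forall f, X f -> cb C f) -> cb C (FEx v g) ->
  FS (fun h => X h \/ h = FEx v g) ->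
  FS (fun h => X h \/ h = FEx v g \/ h = inst v C g).
Proof.
  intros HX HC H L HL.
  destruct (H (FEx v g :: filter (fun h => if excluded_middle_informative (h = inst v C g) then false else true) L))
    as [N [c [s Hs]]].
  { intros h [<-|Hh]; auto. apply filter_In in Hh. destruct Hh as [Hh He].
    destruct (excluded_middle_informative (h = inst v C g)); [discriminate|].
    destruct (HL h Hh) as [?|[?|?]]; tauto. }
  destruct (Hs (FEx v g) (or_introl eq_refl)) as [a Ha].
  exists N, (upd c C a), s. intros h Hh.
  destruct (excluded_middle_informative (h = inst v C g)) as [->|Hn].
  - rewrite inst_sat. rewrite upd_eq.
    assert (E : forall k, k < C -> c k = upd c C a k).
    { intros k Hk. rewrite upd_neq; auto. lia. }
    assert (Hs' : forall s', sat N c s' g <-> sat N (upd c C a) s' g).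
    { intro s'. apply sat_ext_const with (K := C); auto. }
    apply Hs'. exact Ha.
  - assert (Hin : In h (FEx v g :: filter (fun h => if excluded_middle_informative (h = inst v C g) then false else true) L)).
    { right. apply filter_In. split; auto. destruct (excluded_middle_informative (h = inst v C g)); tauto. }
    specialize (Hs h Hin).
    assert (Hcb : cb C h).
    { destruct (HL h Hh) as [Hx|[->|E]]; auto. tauto. }
    apply (proj1 (sat_ext_const N C h Hcb c (upd c C a) s ltac:(intros k Hk; rewrite upd_neq; auto; lia))).
    exact Hs.
Qed.

Lemma stage_FS X K m : FS X -> (forall f, X f -> cb K f) ->
  FS (fun f => X f \/ In f (stage X K m)).
Proof.
  intros H0 HK. induction m.
  - simpl. eapply FS_sub; eauto. tauto.
  - simpl. destruct (excluded_middle_informative _) as [Hd|Hd].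
    + destruct (dec m) as [|n t|r t1 t2|g|g h|g h|g h|v g|v g] eqn:E; try (eapply FS_sub; [exact Hd|]; intros f [?|?]; auto; fail).
      set (C := fresh K (stage X K m) (FEx v g)).
      assert (HW := FS_witness (fun h => X h \/ In h (stage X K m)) C v g).
      eapply FS_sub; [apply HW|].
      * intros h [Hx|Hh]. eapply cb_mono; [apply HK; auto|]. unfold C, fresh; lia.
        apply cb_maxc. apply lmax_in in Hh. unfold C, fresh; lia.
      * apply cb_maxc. unfold C, fresh; lia.
      * eapply FS_sub; [exact Hd|]. simpl. intros h [[?|?]|?]; auto.
      * simpl. intros h [Hx|[Hh|[Hh|Hh]]]; auto.
    + destruct (FS_split _ (dec m) IHm) as [H1|H1].
      * exfalso. apply Hd. eapply FS_sub; [exact H1|]. simpl. intros f [?|[?|?]]; auto.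
      * eapply FS_sub; [exact H1|]. simpl. intros f [?|[?|?]]; auto.
Qed.

Definition Tstar X K f := X f \/ exists m, In f (stage X K m).

Lemma stage_S_incl X K m f : In f (stage X K m) -> In f (stage X K (S m)).
Proof.
  intro H. simpl. destruct (excluded_middle_informative _).
  - destruct (dec m); simpl; auto.
  - simpl; auto.
Qed.

Lemma stage_mono X K m m' f : m <= m' -> In f (stage X K m) -> In f (stage X K m').
Proof. induction 1; auto. intro Hf. apply stage_S_incl; auto. Qed.

Lemma stage_S_dec X K m : In (dec m) (stage X K (S m)) \/ In (FNot (dec m)) (stage X K (S m)).
Proof.
  simpl. destruct (excluded_middle_informative _).
  - left. destruct (dec m); simpl; auto.
  - right. simpl; auto.
Qed.

Lemma stage_S_ex X K m v g : dec m = FEx v g ->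
  In (FNot (dec m)) (stage X K (S m)) \/ exists C, In (inst v C g) (stage X K (S m)).
Proof.
  intro E. simpl. destruct (excluded_middle_informative _).
  - right. rewrite E. simpl. eauto.
  - left. simpl; auto.
Qed.


Lemma Tstar_list X K L : (forall f, In f L -> Tstar X K f) ->
  exists m, forall f, In f L -> X f \/ In f (stage X K m).
Proof.
  induction L as [|a L IH]; intros H.
  - exists 0. simpl; tauto.
  - destruct IH as [m Hm]. { intros; apply H; simpl; auto. }
    destruct (H a (or_introl eq_refl)) as [Ha|[m' Ha]].
    + exists m. intros f [<-|Hf]; auto.
    + exists (max m m'). intros f [<-|Hf].
      * right. eapply stage_mono; [|exact Ha]. lia.
      * destruct (Hm f Hf); auto. right. eapply stage_mono; [|eauto]. lia.
Qed.

Lemma Tstar_FS X K : FS X -> (forall f, X f -> cb K f) -> FS (Tstar X K).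
Proof.
  intros H0 HK L HL. destruct (Tstar_list X K L HL) as [m Hm].
  exact (stage_FS X K m H0 HK L Hm).
Qed.

Lemma Tstar_consistent X K f : FS X -> (forall f, X f -> cb K f) ->
  Tstar X K f -> Tstar X K (FNot f) -> False.
Proof.
  intros H0 HK H1 H2. destruct (Tstar_FS X K H0 HK [f; FNot f]) as [N [c [s Hs]]].
  { intros g [<-|[<-|[]]]; auto. }
  apply (Hs (FNot f)); simpl; auto. apply Hs; simpl; auto.
Qed.

Lemma Tstar_complete X K f : Tstar X K f \/ Tstar X K (FNot f).
Proof.
  destruct (dec_surj f) as [m <-]. destruct (stage_S_dec X K m) as [H|H]; [left|right]; right; eauto.
Qed.

Lemma Tstar_entail X K L psi : FS X -> (forall f, X f -> cb K f) ->
  (forall f, In f L -> Tstar X K f) ->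
  (forall (N : model) c s, (forall f, In f L -> sat N c s f) -> sat N c s psi) ->
  Tstar X K psi.
Proof.
  intros H0 HK HL Hent. destruct (Tstar_complete X K psi) as [H|H]; auto.
  exfalso. destruct (Tstar_FS X K H0 HK (FNot psi :: L)) as [N [c [s Hs]]].
  { intros g [<-|Hg]; auto. }
  apply (Hs (FNot psi)); simpl; auto. apply Hent. intros; apply Hs; simpl; auto.
Qed.

Lemma Tstar_henkin X K v g : FS X -> (forall f, X f -> cb K f) ->
  Tstar X K (FEx v g) -> exists C, Tstar X K (inst v C g).
Proof.
  intros H0 HK H. destruct (dec_surj (FEx v g)) as [m Em].
  destruct (stage_S_ex X K m v g Em) as [H1|[C H1]].
  - exfalso. rewrite Em in H1. eapply Tstar_consistent; eauto. right; eauto.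
  - exists C. right; eauto.
Qed.

Definition N0 X K : model :=
  Model nat 0 (fun a b => Tstar X K (FRel RelR (TConst a) (TConst b)))
    (fun a b => Tstar X K (FRel RelBox (TConst a) (TConst b)))
    (fun a b => Tstar X K (FRel RelDia (TConst a) (TConst b)))
    (fun n a => Tstar X K (FPred n (TConst a))).

Lemma inst_close (M : model) c s v a (sg : nat -> nat) g :
  sat M c s (inst v a (subst (upd (fun w => TConst (sg w)) v (TVar v)) g)) <->
  sat M c s (close (upd sg v a) g).
Proof.
  rewrite inst_sat, subst_sat, close_sat by (apply good_upd, good_close).
  assert (E : (fun w => eval_term M c (upd s v (c a)) (upd (fun w => TConst (sg w)) v (TVar v) w))
              = (fun w => c (upd sg v a w))).
  { apply functional_extensionality; intro w. destruct (Nat.eq_dec w v) as [->|Hn].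
    - rewrite !upd_eq; simpl. now rewrite upd_eq.
    - rewrite !upd_neq by auto. reflexivity. }
  rewrite E; tauto.
Qed.

Lemma truth X K (H0 : FS X) (HK : forall f, X f -> cb K f) f :
  forall sg : nat -> nat, sat (N0 X K) (fun k => k) sg f <-> Tstar X K (close sg f).
Proof.
  assert (Ent := fun L psi => Tstar_entail X K L psi H0 HK).
  assert (Con := fun f => Tstar_consistent X K f H0 HK).
  assert (Com := Tstar_complete X K).
  induction f; intro sg; simpl.
  - split; [tauto|]. intro H. destruct (Tstar_FS X K H0 HK [FBot]) as [N [c [s Hs]]].
    { intros g [<-|[]]; exact H. }
    exact (Hs FBot (or_introl eq_refl)).
  - destruct t; simpl; tauto.
  - destruct r, t1, t2; simpl; tauto.
  - rewrite IHf. unfold close; simpl. split.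
    + intro H. destruct (Com (close sg f)); tauto.
    + intros H1 H2. eapply Con; eauto.
  - rewrite IHf1, IHf2. unfold close; simpl. fold (close sg f1) (close sg f2). split.
    + intros [H1 H2]. apply (Ent [close sg f1; close sg f2]).
      * intros g [<-|[<-|[]]]; auto.
      * intros N c s Hs. simpl. split; apply Hs; simpl; auto.
    + intro H. split; apply (Ent [FAnd (close sg f1) (close sg f2)]);
        try (intros g [<-|[]]; auto); intros N c s Hs; destruct (Hs _ (or_introl eq_refl)); auto.
  - rewrite IHf1, IHf2. unfold close; simpl. fold (close sg f1) (close sg f2). split.
    + intros [H1|H1]; [apply (Ent [close sg f1])|apply (Ent [close sg f2])]; try (intros g [<-|[]]; auto);
        intros N c s Hs; simpl; [left|right]; apply Hs; simpl; auto.
    + intro H. destruct (Com (close sg f1)) as [H1|H1]; auto.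
      destruct (Com (close sg f2)) as [H2|H2]; auto. exfalso.
      destruct (Tstar_FS X K H0 HK [FOr (close sg f1) (close sg f2); FNot (close sg f1); FNot (close sg f2)])
        as [N [c [s Hs]]].
      { intros g [<-|[<-|[<-|[]]]]; auto. }
      destruct (Hs _ (or_introl eq_refl)) as [Hs1|Hs1];
        [apply (Hs (FNot (close sg f1)))|apply (Hs (FNot (close sg f2)))]; simpl; auto.
  - rewrite IHf1, IHf2. unfold close; simpl. fold (close sg f1) (close sg f2). split.
    + intro H. destruct (Com (close sg f1)) as [H1|H1].
      * apply (Ent [close sg f2]); [intros g [<-|[]]; auto|].
        intros N c s Hs Hx. apply Hs; simpl; auto.
      * apply (Ent [FNot (close sg f1)]); [intros g [<-|[]]; auto|].
        intros N c s Hs Hx. exfalso. apply (Hs _ (or_introl eq_refl)); auto.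
    + intros H H1. apply (Ent [FImp (close sg f1) (close sg f2); close sg f1]).
      * intros g [<-|[<-|[]]]; auto.
      * intros N c s Hs. apply (Hs _ (or_introl eq_refl)). apply Hs; simpl; auto.
  - unfold close at 1; simpl. set (G := subst (upd (fun w => TConst (sg w)) v (TVar v)) f). split.
    + intro H. destruct (Com (FAll v G)) as [H1|H1]; auto. exfalso.
      assert (H2 : Tstar X K (FEx v (FNot G))).
      { apply (Ent [FNot (FAll v G)]); [intros g [<-|[]]; auto|].
        intros N c s Hs. simpl. apply not_all_ex_not. exact (Hs _ (or_introl eq_refl)). }
      destruct (Tstar_henkin X K v (FNot G) H0 HK H2) as [C HC].
      assert (H3 : Tstar X K (inst v C G)).
      { apply (Ent [close (upd sg v C) f]).
        - intros g [<-|[]]. apply IHf. auto.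
        - intros N c s Hs. apply inst_close. apply Hs; simpl; auto. }
      exact (Con _ H3 HC).
    + intros H a. apply IHf. apply (Ent [FAll v G]); [intros g [<-|[]]; auto|].
      intros N c s Hs. apply inst_close. apply inst_sat. apply (Hs _ (or_introl eq_refl)).
  - unfold close at 1; simpl. set (G := subst (upd (fun w => TConst (sg w)) v (TVar v)) f). split.
    + intros [a H]. apply IHf in H. apply (Ent [close (upd sg v a) f]); [intros g [<-|[]]; auto|].
      intros N c s Hs. simpl. exists (c a). apply inst_sat. apply inst_close. apply Hs; simpl; auto.
    + intro H. destruct (Tstar_henkin X K v G H0 HK H) as [C HC]. exists C. apply IHf.
      apply (Ent [inst v C G]); [intros g [<-|[]]; auto|].
      intros N c s Hs. apply inst_close. apply Hs; simpl; auto.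
Qed.

Theorem compactness (X : form -> Prop) K :
  (forall f, X f -> cb K f /\ sentence f) -> FS X ->
  exists (N : model) (c s : nat -> U N), forall f, X f -> sat N c s f.
Proof.
  intros HX H0. assert (HK : forall f, X f -> cb K f) by (intros f Hf; apply HX; auto).
  exists (N0 X K), (fun k => k), (fun _ => 0). intros f Hf.
  apply (proj2 (truth X K H0 HK f (fun _ => 0))).
  apply (Tstar_entail X K [f]); auto.
  - intros g [<-|[]]. left; auto.
  - intros N c s Hs. apply close_sat. apply (sentence_sat N c s); [apply HX; auto|]. apply Hs; simpl; auto.
Qed.

Lemma realize th (M : model) (Hs : omega_saturated th M) k n (abar : nat -> U M) (G : form -> Prop) :
  (forall phi, G phi -> wf th n phi /\ forall v, free phi v -> v < k) ->
  (forall L, (forall phi, In phi L -> G phi) -> exists s, forall phi, In phi L -> sat M abar s phi) ->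
  exists s, forall phi, G phi -> sat M abar s phi.
Proof.
  intros HG HF. apply (Hs k n abar G HG).
  set (tau := fun w => n + Nat.min w k).
  set (X := fun f => (wf th n f /\ sentence f /\ sat M abar (fun _ => inh M) f) \/
                     (exists phi, G phi /\ f = close tau phi)).
  destruct (compactness X (n + k + 1)) as [N [c [s HN]]].
  - intros f [[Hw [Hse _]]|[phi [Hp ->]]].
    + split; auto. eapply wf_mono; eauto. lia.
    + split; [|apply close_sentence]. unfold cb, close. apply wf_subst.
      * eapply wf_mono; [apply HG; auto| auto | lia].
      * intros w k0 E. inversion E. unfold tau. lia.
  - intros L HL.
    assert (HLG : exists LG, (forall phi, In phi LG -> G phi) /\
        forall f, In f L -> (wf th n f /\ sentence f /\ sat M abar (fun _ => inh M) f) \/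
                             exists phi, In phi LG /\ f = close tau phi).
    { clear -HL. induction L as [|a L IH].
      - exists nil. simpl; split; tauto.
      - destruct IH as [LG [H1 H2]]. { intros; apply HL; simpl; auto. }
        destruct (HL a (or_introl eq_refl)) as [Ha|[phi [Hp ->]]].
        + exists LG. split; auto. intros f [<-|Hf]; auto.
        + exists (phi :: LG). split. { intros p [<-|Hq]; auto. }
          intros f [<-|Hf]. { right. exists phi. simpl; auto. }
          destruct (H2 f Hf) as [?|[q [Hq ->]]]; auto. right; exists q; simpl; auto. }
    destruct HLG as [LG [HLG1 HLG2]]. destruct (HF LG HLG1) as [s0 Hs0].
    set (c' := fun j => if j <? n then abar j else s0 (j - n)).
    assert (Hc : forall j, j < n -> abar j = c' j).
    { intros j Hj. unfold c'. apply Nat.ltb_lt in Hj. now rewrite Hj. }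
    exists M, c', s0. intros f Hf. destruct (HLG2 f Hf) as [[Hw [Hse Hsat]]|[phi [Hp ->]]].
    + apply (sentence_sat M c' (fun _ => inh M)); auto.
      apply (proj1 (sat_ext_const M n f ltac:(eapply wf_mono; eauto) abar c' _ Hc)). auto.
    + apply close_sat.
      assert (Hw : wf th n phi /\ (forall v, free phi v -> v < k)) by (apply HG; auto).
      apply (proj1 (sat_ext_const M n phi ltac:(eapply wf_mono; [apply Hw|auto|auto]) abar c' _ Hc)).
      assert (Hfr : forall v, free phi v -> s0 v = c' (tau v)).
      2:{ apply (proj1 (sat_ext_free M phi abar s0 _ Hfr)). auto. }
      intros v Hv. apply (proj2 Hw) in Hv. unfold c', tau.
      replace (n + Nat.min v k <? n) with false by (symmetry; apply Nat.ltb_ge; lia).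
      f_equal. lia.
  - exists N, c, (fun w => c (tau w)). split.
    + intros psi Hw Hse Hsat. apply (sentence_sat N c s); auto. apply HN. left; auto.
    + intros phi Hp. apply close_sat with (s := s). apply HN. right; eauto.
Qed.

Fixpoint force (M : model) (a : U M) (I : mform) : Prop :=
  match I with
  | MVar n => mP M n a
  | MBot => False
  | MAnd I1 J1 => force M a I1 /\ force M a J1
  | MOr I1 J1 => force M a I1 \/ force M a J1
  | MImp I1 J1 => forall b, mR M a b -> force M b I1 -> force M b J1
  | MBox I1 => forall b, mR M a b -> forall e, mRB M b e -> force M e I1
  | MDia I1 => forall b, mR M a b -> exists e, mRD M b e /\ force M e I1
  end.

Fixpoint wfI (th : nat -> Prop) (I : mform) : Prop :=
  match I with
  | MVar n => th n
  | MBot => True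
  | MAnd I1 J1 | MOr I1 J1 | MImp I1 J1 => wfI th I1 /\ wfI th J1
  | MBox I1 | MDia I1 => wfI th I1
  end.

Ltac us := repeat first [rewrite upd_eq in * | rewrite upd_neq in * by lia].

Lemma ST_sat (M : model) I : forall y c s, sat M c s (ST22 I y) <-> force M (s y) I.
Proof.
  induction I; intros y c s; simpl; try tauto.
  - rewrite IHI1, IHI2; tauto.
  - rewrite IHI1, IHI2; tauto.
  - split; intros H b; specialize (H b); rewrite IHI1, IHI2 in *; us; auto.
  - split.
    + intros H b Hb e He. specialize (H b). us. specialize (H Hb e). us. rewrite IHI in H. us. auto.
    + intros H b Hb e He. us. rewrite IHI. us. eauto.
  - split.
    + intros H b Hb. specialize (H b). us. destruct (H Hb) as [e [He1 He2]]. exists e.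
      rewrite IHI in He2. us. auto.
    + intros H b Hb. us. destruct (H b Hb) as [e [He1 He2]]. exists e. rewrite IHI. us. auto.
Qed.

Lemma wfST th I : forall n y, wfI th I -> wf th n (ST22 I y).
Proof. induction I; intros n0 y H; simpl in *; intuition. Qed.

Lemma wfST_inv th I : forall n y, wf th n (ST22 I y) -> wfI th I.
Proof. induction I; intros n0 y H; simpl in *; intuition eauto. Qed.

Lemma freeST I : forall y v, free (ST22 I y) v -> v = y.
Proof.
  induction I; intros y v H; simpl in *;
  repeat match goal with
  | H : _ /\ _ |- _ => destruct H
  | H : _ \/ _ |- _ => destruct H
  | H : free (ST22 _ _) _ |- _ => first [apply IHI in H | apply IHI1 in H | apply IHI2 in H]
  end; try tauto; try congruence; lia.
Qed.

Lemma holdsST (M : model) x a I : holds M x a (ST22 I x) <-> force M a I.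
Proof.
  unfold holds. split.
  - intro H. specialize (H (fun _ => a) eq_refl). apply ST_sat in H. exact H.
  - intros H s Hs. apply ST_sat. now rewrite Hs.
Qed.

Lemma A_char th x M1 M2 i j (a : U (pick M1 M2 i)) (b : U (pick M1 M2 j)) :
  A_tp th x M1 M2 (mk i a) (mk j b) <->
  i <> j /\ forall I, wfI th I -> force _ a I -> force _ b I.
Proof.
  unfold A_tp, tp, Defs.in_int, mk; cbn [projT1 projT2]. split.
  - intros [Hij H]. split; auto. intros I Hw Hf.
    assert (H1 := H (ST22 I x)). apply (proj1 (holdsST _ x b I)). apply H1. split; [split; [eauto|apply wfST; auto]|].
    apply (proj2 (holdsST _ x a I)); auto.
  - intros [Hij H]. split; auto. intros phi [[[I ->] Hw] Hh]. split; [split; eauto|].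
    apply (proj2 (holdsST _ x b I)). apply (proj1 (holdsST _ x a I)) in Hh. apply H; auto. eapply wfST_inv; eauto.
Qed.

Lemma B_char th x M1 M2 i j (c : U (pick M1 M2 i)) (d : U (pick M1 M2 j)) :
  B_imp th x M1 M2 (mk i c) (mk j d) <->
  i <> j /\ forall I, wfI th I -> (forall u, mRD _ d u -> ~ force _ u I) ->
                      forall u, mRD _ c u -> ~ force _ u I.
Proof.
  unfold B_imp, imp, ntp, Defs.in_int, mk; cbn [projT1 projT2]. split.
  - intros [Hij H]. split; auto. intros I Hw Hd u Hu Hf.
    assert (Hin : (exists I0, ST22 I x = ST22 I0 x) /\ wf th 0 (ST22 I x)) by (split; eauto; apply wfST; auto).
    destruct (H (ST22 I x)) as [_ H2].
    + split; auto. intros u' Hu'. split; auto. rewrite holdsST. auto.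
    + destruct (H2 u Hu) as [_ H3]. apply H3. apply holdsST; auto.
  - intros [Hij H]. split; auto. intros phi [[[I ->] Hw] Hd]. split; [split; eauto|].
    intros u Hu. split; [split; eauto|]. rewrite holdsST. apply (H I); auto.
    + eapply wfST_inv; eauto.
    + intros u' Hu'. destruct (Hd u' Hu') as [_ H3]. rewrite holdsST in H3. auto.
Qed.

Definition top := MImp MBot MBot.
Lemma force_top M a : force M a top.
Proof. simpl; tauto. Qed.

Lemma back_R th (x : nat) (Ma Mb : model) (Hs : omega_saturated th Ma) (a : U Ma) (b d : U Mb) :
  (forall I, wfI th I -> force Ma a I -> force Mb b I) -> mR Mb b d ->
  exists c, mR Ma a c /\ (forall I, wfI th I -> force Ma c I -> force Mb d I) /\
            (forall I, wfI th I -> force Mb d I -> force Ma c I).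
Proof.
  intros Hab Hbd.
  set (G := fun phi => phi = FRel RelR (TConst 0) (TVar x) \/
          (exists I, wfI th I /\ force Mb d I /\ phi = ST22 I x) \/
          (exists I, wfI th I /\ ~ force Mb d I /\ phi = FNot (ST22 I x))).
  destruct (realize th Ma Hs (S x) 1 (fun _ => a) G) as [s Hsat].
  - intros phi [->|[[I [Hw [_ ->]]]|[I [Hw [_ ->]]]]]; simpl.
    + split; [split; auto|]. intros v [Hv|Hv]; simpl in Hv; [tauto|lia].
    + split; [apply wfST; auto|]. intros v Hv. apply freeST in Hv. lia.
    + split; [apply wfST; auto|]. intros v Hv. apply freeST in Hv. lia.
  - intros L HL.
    assert (Hc : exists Ip Jn, wfI th Ip /\ force Mb d Ip /\ wfI th Jn /\ ~ force Mb d Jn /\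
        forall c, mR Ma a c -> force Ma c Ip -> ~ force Ma c Jn ->
          forall phi, In phi L -> sat Ma (fun _ => a) (fun _ => c) phi).
    { clear -HL. induction L as [|f L IH].
      - exists top, MBot. simpl. repeat split; tauto.
      - destruct IH as [Ip [Jn [H1 [H2 [H3 [H4 H5]]]]]]. { intros; apply HL; simpl; auto. }
        destruct (HL f (or_introl eq_refl)) as [->|[[I [Hw [Hf ->]]]|[I [Hw [Hf ->]]]]].
        + exists Ip, Jn. repeat split; auto. intros c Hc Hp Hn phi [<-|Hphi]; simpl; auto.
        + exists (MAnd I Ip), Jn. repeat split; simpl; auto.
          intros c Hc [Hp1 Hp2] Hn phi [<-|Hphi]; auto. apply ST_sat. auto.
        + exists Ip, (MOr I Jn). simpl. repeat split; auto. tauto.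
          intros c Hc Hp Hn phi [<-|Hphi]; auto. simpl. rewrite ST_sat. tauto. }
    destruct Hc as [Ip [Jn [H1 [H2 [H3 [H4 H5]]]]]].
    destruct (classic (exists c, mR Ma a c /\ force Ma c Ip /\ ~ force Ma c Jn)) as [[c [Hc1 [Hc2 Hc3]]]|Hn].
    + exists (fun _ => c). apply H5; auto.
    + exfalso. assert (Hf : force Ma a (MImp Ip Jn)).
      { simpl. intros c Hc Hp. apply NNPP. intro Hq. apply Hn. eauto. }
      apply Hab in Hf; [|simpl; auto]. simpl in Hf. apply H4. apply Hf; auto.
  - exists (s x). repeat split.
    + apply (Hsat (FRel RelR (TConst 0) (TVar x))). left; auto.
    + intros I Hw Hf. apply NNPP. intro Hn.
      apply (Hsat (FNot (ST22 I x))). { right; right; eauto. } apply ST_sat. auto.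
    + intros I Hw Hf. apply (ST_sat Ma I x (fun _ => a) s). apply Hsat. right; left; eauto.
Qed.

Lemma back_Box th (x : nat) (Ma Mb : model) (Hs : omega_saturated th Ma) (a : U Ma) (b d f : U Mb) :
  (forall I, wfI th I -> force Ma a I -> force Mb b I) -> mR Mb b d -> mRB Mb d f ->
  exists c e, mR Ma a c /\ mRB Ma c e /\ (forall I, wfI th I -> force Ma e I -> force Mb f I).
Proof.
  intros Hab Hbd Hdf.
  set (G := fun phi => phi = FRel RelR (TConst 0) (TVar (S x)) \/
          phi = FRel RelBox (TVar (S x)) (TVar x) \/
          (exists I, wfI th I /\ ~ force Mb f I /\ phi = FNot (ST22 I x))).
  destruct (realize th Ma Hs (S (S x)) 1 (fun _ => a) G) as [s Hsat].
  - intros phi [->|[->|[I [Hw [_ ->]]]]]; simpl.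
    + split; [split; auto|]. intros v [Hv|Hv]; simpl in Hv; [tauto|lia].
    + split; [split; auto|]. intros v [Hv|Hv]; simpl in Hv; lia.
    + split; [apply wfST; auto|]. intros v Hv. apply freeST in Hv. lia.
  - intros L HL.
    assert (Hc : exists Jn, wfI th Jn /\ ~ force Mb f Jn /\
        forall c e, mR Ma a c -> mRB Ma c e -> ~ force Ma e Jn ->
          forall phi, In phi L -> sat Ma (fun _ => a) (upd (fun _ => e) (S x) c) phi).
    { clear -HL. induction L as [|g L IH].
      - exists MBot. simpl. repeat split; tauto.
      - destruct IH as [Jn [H3 [H4 H5]]]. { intros; apply HL; simpl; auto. }
        destruct (HL g (or_introl eq_refl)) as [->|[->|[I [Hw [Hf ->]]]]].
        + exists Jn. repeat split; auto. intros c e Hc He Hn phi [<-|Hphi]; simpl; auto.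
          rewrite upd_eq. auto.
        + exists Jn. repeat split; auto. intros c e Hc He Hn phi [<-|Hphi]; simpl; auto.
          rewrite upd_eq, upd_neq by lia. auto.
        + exists (MOr I Jn). simpl. repeat split; auto. tauto.
          intros c e Hc He Hn phi [<-|Hphi]; auto. simpl. rewrite ST_sat, upd_neq by lia. tauto. }
    destruct Hc as [Jn [H3 [H4 H5]]].
    destruct (classic (exists c e, mR Ma a c /\ mRB Ma c e /\ ~ force Ma e Jn)) as [[c [e [Hc1 [Hc2 Hc3]]]]|Hn].
    + exists (upd (fun _ => e) (S x) c). apply H5; auto.
    + exfalso. assert (Hf : force Ma a (MBox Jn)).
      { simpl. intros c Hc e He. apply NNPP. intro Hq. apply Hn. eauto. }
      apply Hab in Hf; [|simpl; auto]. simpl in Hf. apply H4. eapply Hf; eauto.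
  - exists (s (S x)), (s x). repeat split.
    + apply (Hsat (FRel RelR (TConst 0) (TVar (S x)))). left; auto.
    + apply (Hsat (FRel RelBox (TVar (S x)) (TVar x))). right; left; auto.
    + intros I Hw Hf. apply NNPP. intro Hn.
      apply (Hsat (FNot (ST22 I x))). { right; right; eauto. } apply ST_sat. auto.
Qed.

Lemma forth_B th (x : nat) (Ma Mb : model) (Hs : omega_saturated th Ma) (a : U Ma) (b d : U Mb) :
  (forall I, wfI th I -> force Ma a I -> force Mb b I) -> mR Mb b d ->
  exists c, mR Ma a c /\ (forall I, wfI th I -> (forall u, mRD Mb d u -> ~ force Mb u I) ->
                           forall u, mRD Ma c u -> ~ force Ma u I).
Proof.
  intros Hab Hbd.
  set (G := fun phi => phi = FRel RelR (TConst 0) (TVar x) \/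
          (exists I, wfI th I /\ (forall u, mRD Mb d u -> ~ force Mb u I) /\
             phi = FAll (S x) (FImp (FRel RelDia (TVar x) (TVar (S x))) (FNot (ST22 I (S x)))))).
  assert (Hsem : forall I (s : nat -> U Ma),
    sat Ma (fun _ => a) s (FAll (S x) (FImp (FRel RelDia (TVar x) (TVar (S x))) (FNot (ST22 I (S x)))))
    <-> forall u, mRD Ma (s x) u -> ~ force Ma u I).
  { intros I s. simpl. split.
    - intros H u Hu. specialize (H u). rewrite ST_sat, upd_eq, upd_neq in H by lia. auto.
    - intros H u. rewrite ST_sat, upd_eq, upd_neq by lia. auto. }
  destruct (realize th Ma Hs (S x) 1 (fun _ => a) G) as [s Hsat].
  - intros phi [->|[I [Hw [_ ->]]]]; simpl.
    + split; [split; auto|]. intros v [Hv|Hv]; simpl in Hv; [tauto|lia].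
    + split; [repeat split; auto; apply wfST; auto|]. intros v [Hn [[Hv|Hv]|Hv]]; simpl in Hv; try lia.
      apply freeST in Hv. lia.
  - intros L HL.
    assert (Hc : exists J, wfI th J /\ (forall u, mRD Mb d u -> ~ force Mb u J) /\
        forall c, mR Ma a c -> (forall u, mRD Ma c u -> ~ force Ma u J) ->
          forall phi, In phi L -> sat Ma (fun _ => a) (fun _ => c) phi).
    { clear -HL Hsem. induction L as [|g L IH].
      - exists MBot. simpl. repeat split; auto; tauto.
      - destruct IH as [J [H3 [H4 H5]]]. { intros; apply HL; simpl; auto. }
        destruct (HL g (or_introl eq_refl)) as [->|[I [Hw [Hf ->]]]].
        + exists J. repeat split; auto. intros c Hc Hn phi [<-|Hphi]; simpl; auto.
        + exists (MOr I J). simpl. repeat split; auto.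
          * intros u Hu [Hq|Hq]; [eapply Hf|eapply H4]; eauto.
          * intros c Hc Hn phi [<-|Hphi]. { apply Hsem. intros u Hu Hq. apply (Hn u Hu). simpl; auto. } apply H5; auto. intros u Hu Hq. apply (Hn u Hu). simpl; auto. }
    destruct Hc as [J [H3 [H4 H5]]].
    destruct (classic (exists c, mR Ma a c /\ forall u, mRD Ma c u -> ~ force Ma u J)) as [[c [Hc1 Hc2]]|Hn].
    + exists (fun _ => c). apply H5; auto.
    + exfalso. assert (Hf : force Ma a (MDia J)).
      { simpl. intros c Hc. apply NNPP. intro Hq. apply Hn. exists c. split; auto.
        intros u Hu Hu2. apply Hq. eauto. }
      apply Hab in Hf; [|simpl; auto]. simpl in Hf. destruct (Hf d Hbd) as [e [He1 He2]].
      exact (H4 e He1 He2).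
  - exists (s x). split.
    + apply (Hsat (FRel RelR (TConst 0) (TVar x))). left; auto.
    + intros I Hw Hd. apply (Hsem I s). apply Hsat. right. eauto.
Qed.

Lemma back_B th (x : nat) (Ma Mb : model) (Hs : omega_saturated th Mb) (a c : U Ma) (b : U Mb) :
  (forall I, wfI th I -> (forall u, mRD Mb b u -> ~ force Mb u I) ->
                           forall u, mRD Ma a u -> ~ force Ma u I) -> mRD Ma a c ->
  exists d, mRD Mb b d /\ (forall I, wfI th I -> force Ma c I -> force Mb d I).
Proof.
  intros Hab Hac.
  set (G := fun phi => phi = FRel RelDia (TConst 0) (TVar x) \/
          (exists I, wfI th I /\ force Ma c I /\ phi = ST22 I x)).
  destruct (realize th Mb Hs (S x) 1 (fun _ => b) G) as [s Hsat].
  - intros phi [->|[I [Hw [_ ->]]]]; simpl.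
    + split; [split; auto|]. intros v [Hv|Hv]; simpl in Hv; [tauto|lia].
    + split; [apply wfST; auto|]. intros v Hv. apply freeST in Hv. lia.
  - intros L HL.
    assert (Hc : exists P, wfI th P /\ force Ma c P /\
        forall d, mRD Mb b d -> force Mb d P ->
          forall phi, In phi L -> sat Mb (fun _ => b) (fun _ => d) phi).
    { clear -HL. induction L as [|g L IH].
      - exists top. simpl. repeat split; tauto.
      - destruct IH as [P [H3 [H4 H5]]]. { intros; apply HL; simpl; auto. }
        destruct (HL g (or_introl eq_refl)) as [->|[I [Hw [Hf ->]]]].
        + exists P. repeat split; auto. intros d Hd Hp phi [<-|Hphi]; simpl; auto.
        + exists (MAnd I P). simpl. repeat split; auto.
          intros d Hd [Hp1 Hp2] phi [<-|Hphi]; auto. apply ST_sat. auto. }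
    destruct Hc as [P [H3 [H4 H5]]].
    destruct (classic (exists d, mRD Mb b d /\ force Mb d P)) as [[d [Hd1 Hd2]]|Hn].
    + exists (fun _ => d). apply H5; auto.
    + exfalso. apply (Hab P H3) with (u := c); auto.
      intros u Hu Hp. apply Hn. eauto.
  - exists (s x). split.
    + apply (Hsat (FRel RelDia (TConst 0) (TVar x))). left; auto.
    + intros I Hw Hf. apply (ST_sat Mb I x (fun _ => b) s). apply Hsat. right; eauto.
Qed.

Theorem mainTheorem7 (theta : nat -> Prop) (M1 M2 : model)
  (sat1 : omega_saturated theta M1) (sat2 : omega_saturated theta M2)
  (x : nat) (t : U M1) (t' : U M2)
  (htp : forall phi, tp theta x M1 t phi -> tp theta x M2 t' phi) :
  asimulation22 theta M1 M2 t t' (A_tp theta x M1 M2) (B_imp theta x M1 M2).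
Proof.
  assert (satp : forall b, omega_saturated theta (pick M1 M2 b)) by (intros []; auto).
  unfold asimulation22. split; [|split; [|split; [|split; [|split; [|split; [|split]]]]]].
  - intros p q [H _]; exact H.
  - intros p q [H _]; exact H.
  - unfold A_tp, mk; cbn [projT1 projT2]. split; [discriminate| exact htp].
  - intros i j a b HA n Hn Hp. apply A_char in HA. destruct HA as [_ H].
    apply (H (MVar n)); simpl; auto.
  - intros i j a b d HA Hbd. apply A_char in HA. destruct HA as [Hij H].
    destruct (back_R theta x (pick M1 M2 i) (pick M1 M2 j) (satp i) a b d H Hbd) as [c [H1 [H2 H3]]].
    exists c. split; auto. split; apply A_char; split; auto.
  - intros i j a b d f HA Hbd Hdf. apply A_char in HA. destruct HA as [Hij H].
    destruct (back_Box theta x (pick M1 M2 i) (pick M1 M2 j) (satp i) a b d f H Hbd Hdf) as [c [e [H1 [H2 H3]]]].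
    exists c, e. split; auto. split; auto. apply A_char; split; auto.
  - intros i j a b d HA Hbd. apply A_char in HA. destruct HA as [Hij H].
    destruct (forth_B theta x (pick M1 M2 i) (pick M1 M2 j) (satp i) a b d H Hbd) as [c [H1 H2]].
    exists c. split; auto. apply B_char; split; auto.
  - intros i j a c b HB Hac. apply B_char in HB. destruct HB as [Hij H].
    destruct (back_B theta x (pick M1 M2 i) (pick M1 M2 j) (satp j) a c b H Hac) as [d [H1 H2]].
    exists d. split; auto. apply A_char; split; auto.
Qed.
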